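(* Let $V=\mathbb{C}^6$ and let $\ell,\ell'\subset\mathbb{P}(\wedge^2V)$ be two distinct general lines meeting at a point $\omega''$. Let $d=\mathbb{P}(D)$ and $d'=\mathbb{P}(D')$ be their pivots, and suppose $d\cap d'=\emptyset$ in $\mathbb{P}^5=\mathbb{P}(V)$. Then there exist a basis $e_0,e_1$ of $D$ and a basis $e_2,e_3$ of $D'$ such that $\omega''=[e_0\wedge e_2+e_1\wedge e_3]$.
   Context: Elements of $\wedge^2\mathbb{C}^6$ are identified with skew-symmetric $6\times6$ matrices; rank means matrix rank. Fix a basis $f_0,\dots,f_5$ of $V$. A projective line in $\mathbb{P}(\wedge^2V)$ all of whose points have rank four is called general if it is $PGL_6$-equivalent to the line $\ell_g$ spanned by $f_0\wedge f_2+f_1\wedge f_3$ and $f_0\wedge f_4+f_1\wedge f_5$. A general line $\ell$ is contained in $\mathbb{P}(W\wedge V)$ (the embedded tangent space to $\mathbb{G}(1,5)$ at $[W]$) for a unique $2$-dimensional subspace $W\subset V$ (for $\ell_g$, $W=\langle f_0,f_1\rangle$); the projective line $\mathbb{P}(W)\subset\mathbb{P}(V)$ is called the pivot of $\ell$. Work over $\mathbb{C}$. *)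

(* Defs.v *)
(* Field: C modelled as R[i] = complex R for R : realType
   (mathcomp-real-closed's complex numbers over the reals). *)
From HB Require Import structures.
From mathcomp Require Import all_boot all_order all_algebra.
From mathcomp Require Export complex.
From mathcomp Require Import reals.
Set Implicit Arguments. Unset Strict Implicit. Unset Printing Implicit Defensive.
Import Order.TTheory GRing.Theory Num.Theory.
Local Open Scope ring_scope.

Section Defs.
Variable F : fieldType.

(* Elements of wedge^2 V, V = F^6, as skew-symmetric 6x6 matrices;
   vectors of V are row vectors. *)
Definition skew (X : 'M[F]_6) : Prop := X^T = - X.

Definition wedge (u v : 'rV[F]_6) : 'M[F]_6 := u^T *m v - v^T *m u.

Definition fb (i : 'I_6) : 'rV[F]_6 := delta_mx 0 i.

Definition on_line (A B X : 'M[F]_6) : Prop :=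
  exists a b : F, X = a *: A + b *: B.

Definition is_line (A B : 'M[F]_6) : Prop :=
  [/\ skew A, skew B &
      forall a b : F, a *: A + b *: B = 0 -> a = 0 /\ b = 0].

Definition rank4_line (A B : 'M[F]_6) : Prop :=
  forall a b : F, (a, b) != (0, 0) -> \rank (a *: A + b *: B) = 4%N.

Definition Lg0 : 'M[F]_6 := wedge (fb 0) (fb 2) + wedge (fb 1) (fb 3).
Definition Lg1 : 'M[F]_6 := wedge (fb 0) (fb 4) + wedge (fb 1) (fb 5).

(* g in GL_6 acts on V (rows) by u |-> u *m P, hence on wedge^2 V by
   X |-> P^T X P.  The line spanned by A,B is general if some such P
   maps it onto l_g. *)
Definition general_line (A B : 'M[F]_6) : Prop :=
  [/\ is_line A B, rank4_line A B &
      exists P : 'M[F]_6, P \in unitmx /\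
        forall X, on_line A B X <-> on_line Lg0 Lg1 (P^T *m X *m P)].

(* W /\ V : the span of all w /\ v with w in W (W given by the row space
   of a matrix) *)
Definition in_wedgeV (m : nat) (W : 'M[F]_(m, 6)) (X : 'M[F]_6) : Prop :=
  exists (n : nat) (w v : 'I_n -> 'rV[F]_6),
    (forall i, (w i <= W)%MS) /\ X = \sum_(i < n) wedge (w i) (v i).

(* W (row space of a 2x6 matrix of rank 2) is a pivot of the line (A,B):
   the line is contained in P(W /\ V). *)
Definition is_pivot (A B : 'M[F]_6) (W : 'M[F]_(2, 6)) : Prop :=
  \rank W = 2%N /\ forall X, on_line A B X -> in_wedgeV W X.

End Defs.

(* Main.v *)
Require Import Defs.
From HB Require Import structures.
From mathcomp Require Import all_boot all_order all_algebra.
From mathcomp Require Import complex reals.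
Import Order.TTheory GRing.Theory Num.Theory.
Set Implicit Arguments. Unset Strict Implicit.
Local Open Scope ring_scope.

Section H.
Variable F : fieldType.

Lemma wedgeV_form (D : 'M[F]_(2,6)) (Om : 'M[F]_6) :
  in_wedgeV D Om -> exists X : 'M[F]_(2,6), Om = D^T *m X - X^T *m D.
Proof.
case=> n [w [v [Hw ->]]].
exists (\sum_i (w i *m pinvmx D)^T *m v i).
rewrite mulmx_sumr raddf_sum /= mulmx_suml -sumrB.
apply: eq_bigr => i _; rewrite /wedge.
move: (mulmxKpV (Hw i)); move: (w i *m pinvmx D) => c Ew.
have -> : (c^T *m v i)^T = (v i)^T *m c by rewrite trmx_mul trmxK.
by rewrite mulmxA -trmx_mul Ew -mulmxA Ew.
Qed.

Lemma sub_of_form (D X : 'M[F]_(2,6)) (Om : 'M[F]_6) :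
  \rank Om = 4%N -> Om = D^T *m X - X^T *m D -> (col_mx X D <= Om)%MS.
Proof.
move=> rk E.
have s1 : (Om <= col_mx X D)%MS.
  have -> : Om = row_mx D^T (- X^T) *m col_mx X D by rewrite mul_row_col mulNmx E.
  exact: submxMl.
have s2 : (col_mx X D <= Om)%MS.
  have [_ <-] := mxrank_leqif_sup s1.
  by rewrite eqn_leq mxrankS // rk (leq_trans (rank_leq_row _)).
exact: s2.
Qed.

Lemma pair_form (D D' : 'M[F]_(2,6)) (Om : 'M[F]_6) :
  \rank Om = 4%N -> (D :&: D')%MS = 0 -> \rank D = 2%N -> \rank D' = 2%N ->
  in_wedgeV D Om -> in_wedgeV D' Om ->
  exists M : 'M[F]_2, Om = D^T *m (M *m D') - (M *m D')^T *m D.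
Proof.
move=> rk cap0 rD rD' /wedgeV_form [X EX] /wedgeV_form [Y EY].
have := sub_of_form rk EX; rewrite col_mx_sub => /andP[sXO sDO].
have := sub_of_form rk EY; rewrite col_mx_sub => /andP[sYO sDO'].
pose G := col_mx D D'.
have rkG : \rank G = 4%N by rewrite /G -addsmxE mxrank_disjoint_sum // rD rD'.
have sGO : (G <= Om)%MS by rewrite col_mx_sub sDO sDO'.
have sOG : (Om <= G)%MS.
  have [_ <-] := mxrank_leqif_sup sGO; by rewrite rk rkG.
pose K := X *m pinvmx G; pose L := Y *m pinvmx G.
have EK : X = K *m G by rewrite /K mulmxKpV // (submx_trans sXO sOG).
have EL : Y = L *m G by rewrite /L mulmxKpV // (submx_trans sYO sOG).
clearbody K L.
pose Ed : 'M[F]_(2, 2 + 2) := row_mx 1%:M 0.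
pose Ed' : 'M[F]_(2, 2 + 2) := row_mx 0 1%:M.
have EdG : Ed *m G = D by rewrite mul_row_col mul1mx mul0mx addr0.
have EdG' : Ed' *m G = D' by rewrite mul_row_col mul1mx mul0mx add0r.
pose K1 := Ed^T *m K - K^T *m Ed.
pose K2 := Ed'^T *m L - L^T *m Ed'.
have E1 : Om = G^T *m K1 *m G.
  rewrite EX EK -EdG /K1 mulmxBr mulmxBl !trmx_mul !mulmxA.
  done.
have E2 : Om = G^T *m K2 *m G.
  rewrite EY EL -EdG' /K2 mulmxBr mulmxBl !trmx_mul !mulmxA.
  done.
have [H GH] : exists H, G *m H = 1%:M by apply/row_freeP; rewrite /row_free rkG.
have K12 : K1 = K2.
  have canc Z : H^T *m (G^T *m Z *m G) *m H = Z.
    by rewrite -!mulmxA GH mulmx1 mulmxA -trmx_mul GH trmx1 mul1mx.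
  by rewrite -(canc K1) -(canc K2) -E1 -E2.
have e11 : Ed *m Ed^T = 1%:M by rewrite tr_row_mx mul_row_col !trmx1 trmx0 mul1mx mul0mx addr0.
have e22 : Ed' *m Ed'^T = 1%:M by rewrite tr_row_mx mul_row_col !trmx1 trmx0 mul1mx mul0mx add0r.
have e12 : Ed *m Ed'^T = 0 by rewrite tr_row_mx mul_row_col !trmx1 trmx0 mul1mx mul0mx addr0.
have e21 : Ed' *m Ed^T = 0 by rewrite tr_row_mx mul_row_col !trmx1 trmx0 mul1mx mul0mx addr0.
have eI : Ed^T *m Ed + Ed'^T *m Ed' = 1%:M.
  rewrite !tr_row_mx !mul_col_row !trmx1 !trmx0 !mul1mx !mul0mx ?mulmx0 add_block_mx.
  by rewrite !addr0 !add0r -scalar_mx_block.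
have a11 : Ed *m K1 *m Ed^T = 0.
  by rewrite K12 /K2 mulmxBr mulmxBl !mulmxA e12 mul0mx -!mulmxA e21 !mulmx0 mul0mx subr0.
have a22 : Ed' *m K1 *m Ed'^T = 0.
  by rewrite /K1 mulmxBr mulmxBl !mulmxA e21 mul0mx -!mulmxA e12 !mulmx0 mul0mx subr0.
pose M := Ed *m K1 *m Ed'^T.
have skK1 : K1^T = - K1.
  by rewrite /K1 linearB /= !trmx_mul !trmxK opprB.
have a21 : Ed' *m K1 *m Ed^T = - M^T.
  by rewrite /M !trmx_mul trmxK skK1 mulNmx mulmxN opprK mulmxA.
have EK1 : K1 = Ed^T *m M *m Ed' - Ed'^T *m M^T *m Ed.
  rewrite -[K1]mul1mx -[K1 in LHS]mulmx1 -eI mulmxDl !mulmxDr.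
  rewrite -!mulmxA.
  have re (P Q R S : 'M[F]_(2,2+2)) :
    P^T *m (Q *m (K1 *m (R^T *m S))) = P^T *m (Q *m K1 *m R^T) *m S by rewrite !mulmxA.
  rewrite !re a11 a22 a21 ?mul0mx ?mulmx0 !mul0mx add0r addr0.
  by rewrite mulmxN mulNmx; congr (_ - _); rewrite mulmxA.
exists M; rewrite E1 EK1 mulmxBr mulmxBl !mulmxA -trmx_mul EdG -trmx_mul EdG'.
rewrite -!mulmxA EdG EdG' trmx_mul !mulmxA.
by rewrite !trmx_mul !trmxK !mulmxA.
Qed.



Lemma col_rows (Z : 'M[F]_(2,6)) : col_mx (row 0 Z) (row 1 Z) = Z.
Proof.
apply/matrixP => i j; rewrite mxE; case: splitP => k Hk; rewrite mxE;
  congr (Z _ j); apply/val_inj => /=; rewrite Hk; by case: k {Hk} => [[]].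
Qed.

Lemma wedge_rows (Z W : 'M[F]_(2,6)) :
  wedge (row 0 Z) (row 0 W) + wedge (row 1 Z) (row 1 W) = Z^T *m W - W^T *m Z.
Proof.
apply/matrixP => i j; rewrite /wedge !mxE !big_ord1 !big_ord_recl big_ord0 !mxE.
rewrite !big_ord0 !addr0.
have -> : (lift ord0 ord0 : 'I_2) = 1 by apply/val_inj.
by rewrite opprD addrACA.
Qed.

Lemma wedge2 (u1 u2 w1 w2 : 'rV[F]_6) :
  wedge u1 w1 + wedge u2 w2 =
  (col_mx u1 u2)^T *m col_mx w1 w2 - (col_mx w1 w2)^T *m col_mx u1 u2.
Proof.
rewrite /wedge !tr_col_mx !mul_row_col opprD addrACA.
by congr (_ + _); rewrite addrC.
Qed.

Lemma rank_wedge_form (Z W : 'M[F]_(2,6)) :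
  row_free (col_mx Z W) -> \rank (Z^T *m W - W^T *m Z) = 4%N.
Proof.
move=> /row_freeP [H GH].
pose G := col_mx Z W.
pose Ed : 'M[F]_(2, 2 + 2) := row_mx 1%:M 0.
pose Ed' : 'M[F]_(2, 2 + 2) := row_mx 0 1%:M.
have EdG : Ed *m G = Z by rewrite mul_row_col mul1mx mul0mx addr0.
have EdG' : Ed' *m G = W by rewrite mul_row_col mul1mx mul0mx add0r.
have e11 : Ed *m Ed^T = 1%:M by rewrite tr_row_mx mul_row_col !trmx1 trmx0 mul1mx mul0mx addr0.
have e22 : Ed' *m Ed'^T = 1%:M by rewrite tr_row_mx mul_row_col !trmx1 trmx0 mul1mx mul0mx add0r.
have e12 : Ed *m Ed'^T = 0 by rewrite tr_row_mx mul_row_col !trmx1 trmx0 mul1mx mul0mx addr0.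
have e21 : Ed' *m Ed^T = 0 by rewrite tr_row_mx mul_row_col !trmx1 trmx0 mul1mx mul0mx addr0.
have eI : Ed^T *m Ed + Ed'^T *m Ed' = 1%:M.
  rewrite !tr_row_mx !mul_col_row !trmx1 !trmx0 !mul1mx !mul0mx ?mulmx0 add_block_mx.
  by rewrite !addr0 !add0r -scalar_mx_block.
pose J := Ed^T *m Ed' - Ed'^T *m Ed.
have EJ : Z^T *m W - W^T *m Z = G^T *m J *m G.
  rewrite -EdG -EdG' /J mulmxBr mulmxBl !trmx_mul !mulmxA.
  done.
have JJ : J *m (- J) = 1%:M.
  rewrite mulmxN /J mulmxBr !mulmxBl !mulmxA.
  rewrite -!(mulmxA _ Ed') -!(mulmxA _ Ed) e21 e22 e11 e12 !mulmx0 !mul0mx !mulmx1.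
  by rewrite sub0r subr0 opprD !opprK addrC eI.
have rJ : \rank J = 4%N by rewrite mxrank_unit // -row_free_unit; apply/row_freeP; exists (- J).
apply/eqP; rewrite eqn_leq; apply/andP; split.
  have -> : Z^T *m W - W^T *m Z = row_mx Z^T (- W^T) *m col_mx W Z.
    by rewrite mul_row_col mulNmx.
  exact: (leq_trans (mxrankM_maxr _ _) (rank_leq_row _)).
rewrite -[X in (X <= _)%N]rJ.
have <- : H^T *m (Z^T *m W - W^T *m Z) *m H = J.
  by rewrite EJ -!mulmxA GH mulmx1 mulmxA -trmx_mul GH trmx1 mul1mx.
exact: (leq_trans (mxrankM_maxl _ _) (mxrankM_maxr _ _)).
Qed.

Lemma fbfb (i j : 'I_6) : fb F i *m (fb F j)^T = (i == j)%:R%:M.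
Proof.
rewrite /fb trmx_delta mul_delta_mx_cond.
apply/matrixP => k l; rewrite !ord1 !mxE /=.
by rewrite mulmxnE mxE eqxx mulr1n.
Qed.

Lemma cc (u1 u2 v1 v2 : 'rV[F]_6) :
  col_mx u1 u2 *m (col_mx v1 v2)^T = block_mx (u1 *m v1^T) (u1 *m v2^T) (u2 *m v1^T) (u2 *m v2^T).
Proof. by rewrite tr_col_mx mul_col_row. Qed.

Definition D0 : 'M[F]_(2,6) := col_mx (fb F 0) (fb F 1).
Definition W23 : 'M[F]_(2,6) := col_mx (fb F 2) (fb F 3).
Definition W45 : 'M[F]_(2,6) := col_mx (fb F 4) (fb F 5).

Lemma sm0 n : (0 : F)%:M = 0 :> 'M_n.
Proof. by apply/matrixP => i j; rewrite !mxE mul0rn. Qed.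

Ltac gram := rewrite /D0 /W23 /W45 cc !fbfb /= ?sm0 ?block_mx0 -?scalar_mx_block.

Lemma g1 : D0 *m D0^T = 1%:M. Proof. by gram. Qed.
Lemma g2 : D0 *m W23^T = 0. Proof. by gram. Qed.
Lemma g3 : D0 *m W45^T = 0. Proof. by gram. Qed.
Lemma g4 : W23 *m D0^T = 0. Proof. by gram. Qed.
Lemma g5 : W45 *m D0^T = 0. Proof. by gram. Qed.
Lemma g6 : W23 *m W23^T = 1%:M. Proof. by gram. Qed.
Lemma g7 : W45 *m W45^T = 1%:M. Proof. by gram. Qed.
Lemma g8 : W23 *m W45^T = 0. Proof. by gram. Qed.
Lemma g9 : W45 *m W23^T = 0. Proof. by gram. Qed.

Lemma gl m (X Y Z : 'M[F]_(m,6)) (a b : F) :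
  a *: (X^T *m Y - Y^T *m X) + b *: (X^T *m Z - Z^T *m X) =
  X^T *m (a *: Y + b *: Z) - (a *: Y + b *: Z)^T *m X.
Proof.
have trZ (c : F) (W : 'M[F]_(m,6)) : (c *: W)^T = c *: W^T by apply/matrixP=> i j; rewrite !mxE.
rewrite [(_ + _)^T]raddfD /= !trZ mulmxDr mulmxDl.
rewrite -!scalemxAr -!scalemxAl !scalerBr opprD addrACA.
done.
Qed.

Lemma Lg_form (a b : F) : a *: Lg0 F + b *: Lg1 F =
  D0^T *m (a *: W23 + b *: W45) - (a *: W23 + b *: W45)^T *m D0.
Proof.
have trZ (c : F) (X : 'M[F]_(2,6)) : (c *: X)^T = c *: X^T by apply/matrixP=> i j; rewrite !mxE.
by rewrite /Lg0 /Lg1 !wedge2 gl.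
Qed.

Lemma Lg_free (a b : F) : (a, b) != (0, 0) ->
  row_free (col_mx D0 (a *: W23 + b *: W45)).
Proof.
move=> nz; apply/row_freeP.
have [a0|a0] := eqVneq a 0.
  have b0 : b != 0 by move: nz; rewrite a0; apply: contraNneq => ->.
  exists (row_mx D0^T (b^-1 *: W45^T)).
  rewrite a0 scale0r add0r mul_col_row g1 -!scalemxAr g3 scaler0 -scalemxAl g5 scaler0.
  by rewrite -scalemxAl g7 scalerA mulVf // scale1r -scalar_mx_block.
exists (row_mx D0^T (a^-1 *: W23^T)).
rewrite mul_col_row g1 -!scalemxAr g2 scaler0 !mulmxDl -!scalemxAl g4 g5 !scaler0 addr0.
by rewrite g6 g9 scaler0 addr0 scalerA mulVf // scale1r -scalar_mx_block.
Qed.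

Lemma rank_from_general (A B Om : 'M[F]_6) :
  general_line A B -> Om != 0 -> on_line A B Om -> \rank Om = 4%N.
Proof.
move=> [_ _ [P [Pu HP]]] Om0 onO.
have [a [b Eab]] : on_line (Lg0 F) (Lg1 F) (P^T *m Om *m P) by apply/HP.
have nz : (a, b) != (0, 0).
  apply/eqP => -[a0 b0]; move: Eab; rewrite a0 b0 !scale0r addr0 => E0.
  move/eqP: Om0; apply.
  have PTu : P^T \in unitmx by rewrite unitmx_tr.
  have <- : invmx (P^T) *m (P^T *m Om *m P) *m invmx P = Om.
    by rewrite !mulmxA mulVmx // mul1mx -mulmxA mulmxV // mulmx1.
  by rewrite E0 mulmx0 mul0mx.
have rk' : \rank (P^T *m Om *m P) = 4%N by rewrite Eab Lg_form rank_wedge_form // Lg_free.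
apply/eqP; rewrite eqn_leq; apply/andP; split; last first.
  by rewrite -[X in (X <= _)%N]rk' (leq_trans (mxrankM_maxl _ _) (mxrankM_maxr _ _)).
have PTu : P^T \in unitmx by rewrite unitmx_tr.
have <- : invmx (P^T) *m (P^T *m Om *m P) *m invmx P = Om.
  by rewrite !mulmxA mulVmx // mul1mx -mulmxA mulmxV // mulmx1.
by rewrite -[X in (_ <= X)%N]rk' (leq_trans (mxrankM_maxl _ _) (mxrankM_maxr _ _)).
Qed.

Lemma main_gen (A B A' B' Om : 'M[F]_6) (D D' : 'M[F]_(2, 6)) :
  general_line A B -> general_line A' B' ->
  Om != 0 -> on_line A B Om -> on_line A' B' Om ->
  is_pivot A B D -> is_pivot A' B' D' ->
  (D :&: D')%MS = 0 ->
  exists e0 e1 e2 e3 : 'rV[F]_6,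
    [/\ [/\ (e0 <= D)%MS, (e1 <= D)%MS & \rank (col_mx e0 e1) = 2%N],
        [/\ (e2 <= D')%MS, (e3 <= D')%MS & \rank (col_mx e2 e3) = 2%N] &
        exists c : F, c != 0 /\ Om = c *: (wedge e0 e2 + wedge e1 e3)].
Proof.
move=> gl _ Om0 onO onO' [rD pD] [rD' pD'] cap0.
have rk := rank_from_general gl Om0 onO.
have [M EM] := pair_form rk cap0 rD rD' (pD _ onO) (pD' _ onO').
pose E := M *m D'.
have rE : \rank E = 2%N.
  apply/eqP; rewrite eqn_leq rank_leq_row /=.
  have : (4 <= \rank (col_mx E D))%N.
    rewrite -[X in (X <= _)%N]rk; have -> : Om = row_mx D^T (- E^T) *m col_mx E D.
      by rewrite mul_row_col mulNmx EM.
    exact: mxrankM_maxr.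
  rewrite -addsmxE => /leq_trans/(_ (mxrank_adds_leqif E D)).
  by rewrite rD addn2.
exists (row 0 D), (row 1 D), (row 0 E), (row 1 E); split.
- by rewrite !row_sub col_rows rD.
- by rewrite !(submx_trans (row_sub _ _) (submxMl _ _)) col_rows rE.
- by exists 1; rewrite oner_eq0 scale1r wedge_rows EM.
Qed.

End H.
Local Open Scope complex_scope.

Theorem mainTheorem7 (R : realType) (A B A' B' Om : 'M[R[i]]_6)
    (D D' : 'M[R[i]]_(2, 6)) :
  general_line A B -> general_line A' B' ->
  ~ (forall X, on_line A B X <-> on_line A' B' X) ->
  Om != 0 -> on_line A B Om -> on_line A' B' Om ->
  is_pivot A B D -> is_pivot A' B' D' ->
  (D :&: D')%MS = 0 ->
  exists e0 e1 e2 e3 : 'rV[R[i]]_6,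
    [/\ [/\ (e0 <= D)%MS, (e1 <= D)%MS & \rank (col_mx e0 e1) = 2%N],
        [/\ (e2 <= D')%MS, (e3 <= D')%MS & \rank (col_mx e2 e3) = 2%N] &
        exists c : R[i], c != 0 /\ Om = c *: (wedge e0 e2 + wedge e1 e3)].
Proof.
move=> g g' _; exact: main_gen g g'.
Qed.
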